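(* Fix $f \in (0,1)$, integers $p, q \ge 2$, and $r_1,\dots,r_{n} \in [0,1)$. Then there is a decomposition of $\mathcal{D}_f^{p,q}$ by at most $n$ hyperplanes (lines in the $(s_1,s_2)$-plane) such that, within each region of the decomposition, each of the functions $(s_1,s_2)\mapsto \pi_{f,s_1,s_2}^{p,q}(r_j)$, $j=1,\dots,n$, is a fixed affine linear function of $(s_1, s_2)$.
   Context: For $f\in(0,1)$, integers $p,q\ge 2$ and $s_1,s_2\in\mathbb{R}$, define for $r\in[0,1)$ $$\pi_{f,s_1,s_2}^{p,q}(r) = \max \Big( \big\{\min\{\phi_i^1(r),\phi_i^2(r)\}:i=1,\dots,p\big\}\cup\big\{ \min\{ \psi_j^1(r),\psi_j^2(r) \}: j=1,\dots,q-1 \big\} \Big),$$ where $\phi_i^1(r) = s_1 r + i \frac{1-fs_1}{p}$, $\phi_i^2(r) = s_2 r + (i-1)\frac{1-fs_2}{p-1}$ for $i=1,\dots,p$, and $\psi_j^1(r) = s_1(r-1) + (j-1) \frac{1+(1-f)s_1}{q-1}$, $\psi_j^2(r) = s_2(r-1) + j \frac{1+(1-f)s_2}{q}$ for $j=1,\dots,q-1$. $\mathcal{D}_f^{p,q}$ is the set of $(s_1,s_2)$ for which this function (extended with period $1$) is a valid cut generating function, namely $\pi(0)=0$, $\pi(f)=1$, $\pi$ subadditive and $1$-periodic; explicitly, $\mathcal{D}_f^{p,q} = I_1\times I_2$ where $I_1=\left[\frac{p+q-1}{(p+q-1)f-p},\frac{1}{f-1}\right]$ if $(p+q-1)f-p<0$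 and $I_1=\left(-\infty,\frac{1}{f-1}\right]$ otherwise, and $I_2=\left[\frac1f,\frac{p+q-1}{q-(p+q-1)(1-f)}\right]$ if $(p+q-1)(1-f)-q<0$ and $I_2=\left[\frac1f,+\infty\right)$ otherwise. *)

(* Defs.v *)
From Stdlib Require Import Reals Lra List.
Import ListNotations.
Open Scope R_scope.

Definition phi1 (f : R) (p : nat) (s1 r : R) (i : nat) : R :=
  s1 * r + INR i * ((1 - f * s1) / INR p).
Definition phi2 (f : R) (p : nat) (s2 r : R) (i : nat) : R :=
  s2 * r + (INR i - 1) * ((1 - f * s2) / (INR p - 1)).
Definition psi1 (f : R) (q : nat) (s1 r : R) (j : nat) : R :=
  s1 * (r - 1) + (INR j - 1) * ((1 + (1 - f) * s1) / (INR q - 1)).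
Definition psi2 (f : R) (q : nat) (s2 r : R) (j : nat) : R :=
  s2 * (r - 1) + INR j * ((1 + (1 - f) * s2) / INR q).

Definition pi_candidates (f : R) (p q : nat) (s1 s2 r : R) : list R :=
  map (fun i => Rmin (phi1 f p s1 r i) (phi2 f p s2 r i)) (seq 1 p)
  ++ map (fun j => Rmin (psi1 f q s1 r j) (psi2 f q s2 r j)) (seq 1 (q - 1)).

(* pi_{f,s1,s2}^{p,q}(r) for r in [0,1): the maximum of the candidates.
   The base value of the fold is the i = 1 candidate, which belongs to the list
   (p >= 2), so this is exactly the maximum. *)
Definition pi_fun (f : R) (p q : nat) (s1 s2 r : R) : R :=
  fold_right Rmax (Rmin (phi1 f p s1 r 1) (phi2 f p s2 r 1))
    (pi_candidates f p q s1 s2 r).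

Definition in_I1 (f : R) (p q : nat) (s1 : R) : Prop :=
  if Rlt_dec ((INR p + INR q - 1) * f - INR p) 0
  then (INR p + INR q - 1) / ((INR p + INR q - 1) * f - INR p) <= s1
       /\ s1 <= 1 / (f - 1)
  else s1 <= 1 / (f - 1).

Definition in_I2 (f : R) (p q : nat) (s2 : R) : Prop :=
  if Rlt_dec ((INR p + INR q - 1) * (1 - f) - INR q) 0
  then 1 / f <= s2
       /\ s2 <= (INR p + INR q - 1) / (INR q - (INR p + INR q - 1) * (1 - f))
  else 1 / f <= s2.

Definition in_D (f : R) (p q : nat) (s1 s2 : R) : Prop :=
  in_I1 f p q s1 /\ in_I2 f p q s2.

(* A line (hyperplane) a*s1 + b*s2 + c = 0 in the (s1,s2)-plane, encoded as (a,b,c). *)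
Definition line_ok (L : R * R * R) : Prop :=
  let '(a, b, _) := L in a <> 0 \/ b <> 0.

Definition side (L : R * R * R) (s1 s2 : R) : comparison :=
  let '(a, b, c) := L in
  let v := a * s1 + b * s2 + c in
  if Rlt_dec v 0 then Lt else if Rlt_dec 0 v then Gt else Eq.

Definition same_region (Ls : list (R * R * R)) (s1 s2 t1 t2 : R) : Prop :=
  forall L, In L Ls -> side L s1 s2 = side L t1 t2.

(* Main.v *)
Require Import Defs.
From Stdlib Require Import Reals List Lra Lia Psatz Arith.
Import ListNotations.
Open Scope R_scope.

Definition gg (f x : R) := Rmin (x/f) ((1-x)/(1-f)).

Lemma gg_lip f x y : 0<f<1 -> x <= y ->
  gg f y - gg f x <= (y-x) * /f /\ -((y-x) * /(1-f)) <= gg f y - gg f x.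
Proof.
  intros Hf Hxy. unfold gg, Rmin, Rdiv.
  assert (Ha: 0 < /f) by (apply Rinv_0_lt_compat; lra).
  assert (Hb: 0 < /(1-f)) by (apply Rinv_0_lt_compat; lra).
  set (a := /f) in *. set (b := /(1-f)) in *.
  destruct (Rle_dec (x*a) ((1-x)*b)); destruct (Rle_dec (y*a) ((1-y)*b)); split; nra.
Qed.

Lemma s1_eq f : 0<f<1 -> 1/(f-1) = - /(1-f).
Proof. intros; field; lra. Qed.

Lemma pivA1 f s1 x0 y : 0<f<1 -> s1 <= 1/(f-1) -> x0 <= y -> gg f x0 + s1*(y-x0) <= gg f y.
Proof.
  intros Hf Hs H. destruct (gg_lip f x0 y Hf H) as [_ H2].
  rewrite s1_eq in Hs by lra. nra.
Qed.
Lemma pivA2 f s1 x0 y : 0<f<1 -> s1 <= 1/(f-1) -> y <= x0 -> gg f y <= gg f x0 + s1*(y-x0).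
Proof.
  intros Hf Hs H. destruct (gg_lip f y x0 Hf H) as [_ H2].
  rewrite s1_eq in Hs by lra. nra.
Qed.
Lemma pivB1 f s2 x0 y : 0<f<1 -> 1/f <= s2 -> x0 <= y -> gg f y <= gg f x0 + s2*(y-x0).
Proof.
  intros Hf Hs H. destruct (gg_lip f x0 y Hf H) as [H2 _].
  unfold Rdiv in Hs; rewrite Rmult_1_l in Hs. nra.
Qed.
Lemma pivB2 f s2 x0 y : 0<f<1 -> 1/f <= s2 -> y <= x0 -> gg f x0 + s2*(y-x0) <= gg f y.
Proof.
  intros Hf Hs H. destruct (gg_lip f y x0 Hf H) as [H2 _].
  unfold Rdiv in Hs; rewrite Rmult_1_l in Hs. nra.
Qed.

Lemma formL f u : 0<f<1 -> 0 <= u <= 1 -> gg f (u*f) = u.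
Proof.
  intros Hf Hu. unfold gg. rewrite Rmin_left.
  - field; lra.
  - assert (E1: u*f/f = u) by (field; lra). rewrite E1.
    assert (E2: (1 - u*f)/(1-f) = 1 + (1-u)*f/(1-f)) by (field; lra). rewrite E2.
    assert (0 <= (1-u)*f/(1-f)).
    { apply Rmult_le_pos; [nra| left; apply Rinv_0_lt_compat; lra]. }
    lra.
Qed.

Lemma formR f u : 0<f<1 -> 0 <= u <= 1 -> gg f (1 - u*(1-f)) = u.
Proof.
  intros Hf Hu. unfold gg. rewrite Rmin_right.
  - field; lra.
  - assert (E1: (1 - (1 - u*(1-f)))/(1-f) = u) by (field; lra). rewrite E1.
    assert (E2: (1 - u*(1-f))/f = 1 + (1-u)*(1-f)/f) by (field; lra). rewrite E2.
    assert (0 <= (1-u)*(1-f)/f).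
    { apply Rmult_le_pos; [nra| left; apply Rinv_0_lt_compat; lra]. }
    lra.
Qed.

Lemma ratio_le a b c d : 0<b -> 0<d -> a*d <= c*b -> a/b <= c/d.
Proof.
  intros Hb Hd H.
  assert (E1: a/b = (a*d) * /(b*d)) by (field; lra).
  assert (E2: c/d = (c*b) * /(b*d)) by (field; lra).
  rewrite E1, E2. apply Rmult_le_compat_r; [left; apply Rinv_0_lt_compat; nra | lra].
Qed.

Lemma frac01 K P : 0 <= K <= P -> 0 < P -> 0 <= K/P <= 1.
Proof.
  intros H HP. assert (P * /P = 1) by (field; lra).
  assert (0 < /P) by (apply Rinv_0_lt_compat; lra).
  unfold Rdiv; split; nra.
Qed.
Definition al f p q k := if Nat.ltb k p then (INR (S k) / INR p) * f
  else 1 - ((INR (p+q-1-k) - 1)/(INR q - 1)) * (1-f).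
Definition be f p q k := if Nat.ltb k p then (INR k / (INR p - 1)) * f
  else 1 - (INR (p+q-1-k)/INR q) * (1-f).
Definition Aof f p q s1 r k := if Nat.ltb k p then phi1 f p s1 r (S k)
  else psi1 f q s1 r (p+q-1-k).
Definition Bof f p q s2 r k := if Nat.ltb k p then phi2 f p s2 r (S k)
  else psi2 f q s2 r (p+q-1-k).

Lemma INR_ge2 p : (2 <= p)%nat -> 2 <= INR p.
Proof. intros H. apply le_INR in H. simpl in H. lra. Qed.

Lemma jbounds p q k : (p <= k)%nat -> (k < p+q-1)%nat ->
  1 <= INR (p+q-1-k) /\ INR (p+q-1-k) + 1 <= INR q.
Proof.
  intros H1 H2. split.
  - assert (H: (1 <= p+q-1-k)%nat) by lia. apply le_INR in H. simpl in H. lra.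
  - assert (H: (S (p+q-1-k) <= q)%nat) by lia. apply le_INR in H. rewrite S_INR in H. lra.
Qed.

Lemma kbounds p k : (k < p)%nat -> 0 <= INR k /\ INR k + 1 <= INR p.
Proof.
  intros H. split. apply pos_INR. apply le_INR in H. rewrite S_INR in H. lra.
Qed.

Lemma Aform f p q s1 r k : 0<f<1 -> (2<=p)%nat -> (2<=q)%nat -> (k < p+q-1)%nat ->
  Aof f p q s1 r k = s1 * (r - al f p q k) + gg f (al f p q k).
Proof.
  intros Hf Hp Hq Hk. pose proof (INR_ge2 p Hp). pose proof (INR_ge2 q Hq).
  unfold Aof, al. destruct (Nat.ltb_spec k p).
  - destruct (kbounds p k H1). rewrite formL by (auto; apply frac01; rewrite ?S_INR; lra).
    unfold phi1. rewrite S_INR. field. lra.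
  - destruct (jbounds p q k H1 Hk). rewrite formR by (auto; apply frac01; lra).
    unfold psi1. field. lra.
Qed.

Lemma Bform f p q s2 r k : 0<f<1 -> (2<=p)%nat -> (2<=q)%nat -> (k < p+q-1)%nat ->
  Bof f p q s2 r k = s2 * (r - be f p q k) + gg f (be f p q k).
Proof.
  intros Hf Hp Hq Hk. pose proof (INR_ge2 p Hp). pose proof (INR_ge2 q Hq).
  unfold Bof, be. destruct (Nat.ltb_spec k p).
  - destruct (kbounds p k H1). rewrite formL by (auto; apply frac01; lra).
    unfold phi2. rewrite S_INR. field. lra.
  - destruct (jbounds p q k H1 Hk). rewrite formR by (auto; apply frac01; lra).
    unfold psi2. field. lra.
Qed.

Lemma I1 f p q k : 0<f<1 -> (2<=p)%nat -> (2<=q)%nat -> (k < p+q-1)%nat ->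
  be f p q k <= al f p q k.
Proof.
  intros Hf Hp Hq Hk. pose proof (INR_ge2 p Hp). pose proof (INR_ge2 q Hq).
  unfold be, al. destruct (Nat.ltb_spec k p).
  - destruct (kbounds p k H1). apply Rmult_le_compat_r; [lra|].
    apply ratio_le; [lra|lra|]; rewrite ?S_INR; nra.
  - destruct (jbounds p q k H1 Hk).
    assert ((INR (p + q - 1 - k) - 1) / (INR q - 1) <= INR (p + q - 1 - k) / INR q).
    { apply ratio_le; [lra|lra|]; nra. }
    nra.
Qed.

Lemma I2 f p q k : 0<f<1 -> (2<=p)%nat -> (2<=q)%nat -> (S k < p+q-1)%nat ->
  al f p q k <= be f p q (S k).
Proof.
  intros Hf Hp Hq Hk. pose proof (INR_ge2 p Hp). pose proof (INR_ge2 q Hq).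
  unfold be, al. destruct (Nat.ltb_spec k p); destruct (Nat.ltb_spec (S k) p); try lia.
  - destruct (kbounds p k H1). apply Rmult_le_compat_r; [lra|].
    apply ratio_le; [lra|lra|]; rewrite ?S_INR; nra.
  - assert (S k = p) by lia. subst p.
    assert (E: INR (S k) / INR (S k) = 1) by (field; lra). rewrite E.
    assert (Hj: (S k < S k + q - 1)%nat) by lia.
    destruct (jbounds (S k) q (S k) (le_n _) Hj).
    assert (INR (S k + q - 1 - S k) / INR q <= 1) by (apply frac01; lra). nra.
  - assert (Hk' : (k < p+q-1)%nat) by lia.
    destruct (jbounds p q (S k) H2 Hk).
    replace (p + q - 1 - k)%nat with (S (p+q-1-S k)) by lia. rewrite S_INR.
    assert (INR (p + q - 1 - S k) / INR q <= (INR (p + q - 1 - S k) + 1 - 1) / (INR q - 1)).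
    { apply ratio_le; [lra|lra|]; nra. }
    nra.
Qed.
Lemma chain f p q d : 0<f<1 -> (2<=p)%nat -> (2<=q)%nat -> forall l, (l + d < p+q-1)%nat ->
  be f p q l <= be f p q (l+d) /\ al f p q l <= al f p q (l+d).
Proof.
  intros Hf Hp Hq. induction d; intros l H.
  - rewrite Nat.add_0_r. lra.
  - destruct (IHd l ltac:(lia)).
    replace (l + S d)%nat with (S (l+d)) by lia.
    pose proof (I1 f p q (l+d) Hf Hp Hq ltac:(lia)).
    pose proof (I2 f p q (l+d) Hf Hp Hq ltac:(lia)).
    pose proof (I1 f p q (S (l+d)) Hf Hp Hq ltac:(lia)).
    lra.
Qed.

Lemma mono_al f p q l k : 0<f<1 -> (2<=p)%nat -> (2<=q)%nat -> (l <= k)%nat -> (k < p+q-1)%nat ->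
  al f p q l <= al f p q k.
Proof. intros. replace k with (l + (k-l))%nat by lia. apply chain; auto; lia. Qed.
Lemma mono_be f p q l k : 0<f<1 -> (2<=p)%nat -> (2<=q)%nat -> (l <= k)%nat -> (k < p+q-1)%nat ->
  be f p q l <= be f p q k.
Proof. intros. replace k with (l + (k-l))%nat by lia. apply chain; auto; lia. Qed.
Lemma al_be f p q l k : 0<f<1 -> (2<=p)%nat -> (2<=q)%nat -> (l < k)%nat -> (k < p+q-1)%nat ->
  al f p q l <= be f p q k.
Proof.
  intros. pose proof (mono_al f p q l (k-1) H H0 H1 ltac:(lia) ltac:(lia)).
  pose proof (I2 f p q (k-1) H H0 H1 ltac:(lia)). replace (S (k-1)) with k in * by lia. lra.
Qed.

Lemma find f p q r : 0<f<1 -> (2<=p)%nat -> (2<=q)%nat -> be f p q 0 <= r ->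
  forall m, (m < p+q-1)%nat -> r <= al f p q m ->
  exists k, (k <= m)%nat /\ ((be f p q k <= r <= al f p q k) \/
     ((S k < p+q-1)%nat /\ al f p q k <= r <= be f p q (S k))).
Proof.
  intros Hf Hp Hq H0. induction m; intros Hm Hr.
  - exists 0%nat. split; [lia| left; lra].
  - destruct (Rle_dec r (al f p q m)).
    + destruct (IHm ltac:(lia) r0) as [k [Hk1 Hk2]]. exists k. split; [lia|auto].
    + destruct (Rle_dec r (be f p q (S m))).
      * exists m. split; [lia|right; split; [lia|lra]].
      * exists (S m). split; [lia|left; lra].
Qed.

Lemma fold_le (b V : R) l : b <= V -> (forall x, In x l -> x <= V) -> fold_right Rmax b l <= V.
Proof.
  induction l; simpl; intros; auto. apply Rmax_lub; auto.
Qed.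
Lemma fold_ge (b x : R) l : (x = b \/ In x l) -> x <= fold_right Rmax b l.
Proof.
  induction l; simpl; intros [H|H]; try lra; try contradiction.
  - eapply Rle_trans; [apply IHl; auto| apply Rmax_r].
  - destruct H. subst. apply Rmax_l. eapply Rle_trans; [apply IHl; auto| apply Rmax_r].
Qed.
Lemma fold_max (b V : R) l : b <= V -> (forall x, In x l -> x <= V) -> In V l ->
  fold_right Rmax b l = V.
Proof. intros. apply Rle_antisym; [apply fold_le|apply fold_ge]; auto. Qed.

Lemma cand_k f p q s1 s2 r x : (2<=p)%nat -> (2<=q)%nat ->
  In x (pi_candidates f p q s1 s2 r) ->
  exists k, (k < p+q-1)%nat /\ x = Rmin (Aof f p q s1 r k) (Bof f p q s2 r k).
Proof.
  intros Hp Hq. unfold pi_candidates. rewrite in_app_iff.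
  intros [H|H]; apply in_map_iff in H; destruct H as [i [Hx Hi]]; apply in_seq in Hi.
  - exists (i-1)%nat. split; [lia|]. unfold Aof, Bof.
    destruct (Nat.ltb_spec (i-1) p); [|lia]. replace (S (i-1)) with i by lia. auto.
  - exists (p+q-1-i)%nat. split; [lia|]. unfold Aof, Bof.
    destruct (Nat.ltb_spec (p+q-1-i) p); [lia|].
    replace (p + q - 1 - (p + q - 1 - i))%nat with i by lia. auto.
Qed.

Lemma k_cand f p q s1 s2 r k : (2<=p)%nat -> (2<=q)%nat -> (k < p+q-1)%nat ->
  In (Rmin (Aof f p q s1 r k) (Bof f p q s2 r k)) (pi_candidates f p q s1 s2 r).
Proof.
  intros Hp Hq Hk. unfold pi_candidates. rewrite in_app_iff. unfold Aof, Bof.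
  destruct (Nat.ltb_spec k p).
  - left. apply in_map_iff. exists (S k). split; auto. apply in_seq. lia.
  - right. apply in_map_iff. exists (p+q-1-k)%nat. split; auto. apply in_seq. lia.
Qed.

Lemma inD_facts f p q s1 s2 : in_D f p q s1 s2 -> s1 <= 1/(f-1) /\ 1/f <= s2.
Proof.
  unfold in_D, in_I1, in_I2. destruct (Rlt_dec _ 0); destruct (Rlt_dec _ 0); tauto.
Qed.

Lemma base_eq f p q s1 s2 r : (2<=p)%nat ->
  Rmin (phi1 f p s1 r 1) (phi2 f p s2 r 1) = Rmin (Aof f p q s1 r 0) (Bof f p q s2 r 0).
Proof. intros. unfold Aof, Bof. destruct (Nat.ltb_spec 0 p); [auto|lia]. Qed.
Lemma shape f p q r : 0<f<1 -> (2<=p)%nat -> (2<=q)%nat -> 0 <= r <= 1 ->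
  exists k, (k < p+q-1)%nat /\
  ((forall s1 s2, in_D f p q s1 s2 ->
      pi_fun f p q s1 s2 r = Rmin (Aof f p q s1 r k) (Bof f p q s2 r k))
   \/ ((S k < p+q-1)%nat /\ forall s1 s2, in_D f p q s1 s2 ->
      pi_fun f p q s1 s2 r = Rmax (Aof f p q s1 r k) (Bof f p q s2 r (S k)))).
Proof.
  intros Hf Hp Hq Hr.
  assert (Hb0 : be f p q 0 = 0).
  { unfold be. destruct (Nat.ltb_spec 0 p); [|lia]. simpl. field. pose proof (INR_ge2 p Hp). lra. }
  assert (HaN : al f p q (p+q-1-1) = 1).
  { unfold al. destruct (Nat.ltb_spec (p+q-1-1) p); [lia|].
    replace (p + q - 1 - (p + q - 1 - 1))%nat with 1%nat by lia. simpl. field.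
    pose proof (INR_ge2 q Hq). lra. }
  destruct (find f p q r Hf Hp Hq ltac:(lra) (p+q-1-1)%nat ltac:(lia) ltac:(lra))
    as [k [Hk [[Hb Ha]|[HSk [Ha Hb]]]]].
  - exists k. split; [lia|]. left. intros s1 s2 HD. destruct (inD_facts _ _ _ _ _ HD) as [Hs1 Hs2].
    assert (Hk' : (k < p+q-1)%nat) by lia.
    assert (HA : gg f r <= Aof f p q s1 r k).
    { rewrite Aform by auto. pose proof (pivA2 f s1 (al f p q k) r Hf Hs1 Ha). lra. }
    assert (HB : gg f r <= Bof f p q s2 r k).
    { rewrite Bform by auto. pose proof (pivB1 f s2 (be f p q k) r Hf Hs2 Hb). lra. }
    assert (Hall : forall l, (l < p+q-1)%nat ->
       Rmin (Aof f p q s1 r l) (Bof f p q s2 r l) <= Rmin (Aof f p q s1 r k) (Bof f p q s2 r k)).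
    { intros l Hl. destruct (lt_eq_lt_dec l k) as [[Hlk|Hlk]|Hlk].
      - eapply Rle_trans; [apply Rmin_l|]. apply Rmin_glb; eapply Rle_trans; [|exact HA| |exact HB];
        rewrite Aform by auto; pose proof (al_be f p q l k Hf Hp Hq Hlk Hk');
        pose proof (pivA1 f s1 (al f p q l) r Hf Hs1 ltac:(lra)); lra.
      - subst; lra.
      - eapply Rle_trans; [apply Rmin_r|]. apply Rmin_glb; eapply Rle_trans; [|exact HA| |exact HB];
        rewrite Bform by auto; pose proof (al_be f p q k l Hf Hp Hq Hlk Hl);
        pose proof (pivB2 f s2 (be f p q l) r Hf Hs2 ltac:(lra)); lra. }
    unfold pi_fun. rewrite base_eq with (q:=q) by auto. apply fold_max.
    + apply Hall; lia.
    + intros x Hx. destruct (cand_k f p q s1 s2 r x Hp Hq Hx) as [l [Hl ->]]. auto.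
    + apply k_cand; auto.
  - exists k. split; [lia|]. right. split; [auto|]. intros s1 s2 HD.
    destruct (inD_facts _ _ _ _ _ HD) as [Hs1 Hs2].
    assert (Hk' : (k < p+q-1)%nat) by lia.
    pose proof (I1 f p q k Hf Hp Hq Hk'). pose proof (I1 f p q (S k) Hf Hp Hq HSk).
    assert (T1 : Rmin (Aof f p q s1 r k) (Bof f p q s2 r k) = Aof f p q s1 r k).
    { apply Rmin_left. rewrite Aform, Bform by auto.
      pose proof (pivA1 f s1 (al f p q k) r Hf Hs1 Ha).
      pose proof (pivB1 f s2 (be f p q k) r Hf Hs2 ltac:(lra)). lra. }
    assert (T2 : Rmin (Aof f p q s1 r (S k)) (Bof f p q s2 r (S k)) = Bof f p q s2 r (S k)).
    { apply Rmin_right. rewrite Aform, Bform by auto.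
      pose proof (pivA2 f s1 (al f p q (S k)) r Hf Hs1 ltac:(lra)).
      pose proof (pivB2 f s2 (be f p q (S k)) r Hf Hs2 Hb). lra. }
    assert (Hall : forall l, (l < p+q-1)%nat ->
       Rmin (Aof f p q s1 r l) (Bof f p q s2 r l) <= Rmax (Aof f p q s1 r k) (Bof f p q s2 r (S k))).
    { intros l Hl. destruct (le_lt_dec l k) as [Hlk|Hlk].
      - eapply Rle_trans; [apply Rmin_l|]. eapply Rle_trans; [|apply Rmax_l].
        rewrite !Aform by auto. pose proof (mono_al f p q l k Hf Hp Hq Hlk Hk').
        pose proof (pivA1 f s1 (al f p q l) (al f p q k) Hf Hs1 ltac:(lra)). lra.
      - eapply Rle_trans; [apply Rmin_r|]. eapply Rle_trans; [|apply Rmax_r].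
        rewrite !Bform by auto. pose proof (mono_be f p q (S k) l Hf Hp Hq Hlk Hl).
        pose proof (pivB2 f s2 (be f p q l) (be f p q (S k)) Hf Hs2 ltac:(lra)). lra. }
    unfold pi_fun. rewrite base_eq with (q:=q) by auto. apply fold_max.
    + apply Hall; lia.
    + intros x Hx. destruct (cand_k f p q s1 s2 r x Hp Hq Hx) as [l [Hl ->]]. auto.
    + unfold Rmax. destruct (Rle_dec _ _).
      * rewrite <- T2. apply k_cand; auto.
      * rewrite <- T1. apply k_cand; auto.
Qed.
Lemma side_cases a b c s1 s2 :
  (side (a,b,c) s1 s2 = Lt /\ a*s1+b*s2+c < 0) \/
  (side (a,b,c) s1 s2 = Eq /\ a*s1+b*s2+c = 0) \/
  (side (a,b,c) s1 s2 = Gt /\ 0 < a*s1+b*s2+c).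
Proof.
  unfold side. destruct (Rlt_dec _ 0); [left; auto|].
  destruct (Rlt_dec 0 _); [right; right; auto| right; left; split; auto; lra].
Qed.

Lemma line_lemma (F : R -> R -> R) (D : R -> R -> Prop) a1 a2 a0 b1 b2 b0 x1 x2 x0 y1 y2 y0 :
  (forall s1 s2, D s1 s2 ->
     (a1*s1+a2*s2+a0 <= b1*s1+b2*s2+b0 -> F s1 s2 = x1*s1+x2*s2+x0) /\
     (b1*s1+b2*s2+b0 <= a1*s1+a2*s2+a0 -> F s1 s2 = y1*s1+y2*s2+y0)) ->
  exists L, line_ok L /\ forall t1 t2, D t1 t2 -> exists al be ga,
    forall s1 s2, D s1 s2 -> side L s1 s2 = side L t1 t2 -> F s1 s2 = al*s1+be*s2+ga.
Proof.
  intros HF.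
  destruct (Req_dec (a1-b1) 0) as [H1|H1]; [destruct (Req_dec (a2-b2) 0) as [H2|H2]|].
  - exists (1,0,0). split; [simpl; left; lra|]. intros t1 t2 _.
    destruct (Rle_dec a0 b0).
    + exists x1, x2, x0. intros s1 s2 Ds _. apply (HF s1 s2 Ds).
      assert (a1 = b1) by lra. assert (a2 = b2) by lra. subst. lra.
    + exists y1, y2, y0. intros s1 s2 Ds _. apply (HF s1 s2 Ds).
      assert (a1 = b1) by lra. assert (a2 = b2) by lra. subst. lra.
  - exists (a1-b1, a2-b2, a0-b0). split; [simpl; right; auto|].
    intros t1 t2 _.
    destruct (side_cases (a1-b1) (a2-b2) (a0-b0) t1 t2) as [[Ht _]|[[Ht _]|[Ht _]]];
    [exists x1, x2, x0|exists x1, x2, x0|exists y1, y2, y0]; intros s1 s2 Ds Hs; rewrite Ht in Hs;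
    destruct (side_cases (a1-b1) (a2-b2) (a0-b0) s1 s2) as [[Hs' Hv]|[[Hs' Hv]|[Hs' Hv]]];
    rewrite Hs' in Hs; try discriminate; apply (HF s1 s2 Ds); lra.
  - exists (a1-b1, a2-b2, a0-b0). split; [simpl; left; auto|].
    intros t1 t2 _.
    destruct (side_cases (a1-b1) (a2-b2) (a0-b0) t1 t2) as [[Ht _]|[[Ht _]|[Ht _]]];
    [exists x1, x2, x0|exists x1, x2, x0|exists y1, y2, y0]; intros s1 s2 Ds Hs; rewrite Ht in Hs;
    destruct (side_cases (a1-b1) (a2-b2) (a0-b0) s1 s2) as [[Hs' Hv]|[[Hs' Hv]|[Hs' Hv]]];
    rewrite Hs' in Hs; try discriminate; apply (HF s1 s2 Ds); lra.
Qed.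

Lemma build (n : nat) (P : nat -> (R*R*R) -> Prop) :
  (forall j, (j < n)%nat -> exists L, P j L) ->
  exists Ls, length Ls = n /\ forall j, (j < n)%nat -> P j (nth j Ls (0,0,0)).
Proof.
  induction n; intros H.
  - exists nil. split; auto. intros; lia.
  - destruct IHn as [Ls [Hl HP]]; [intros; apply H; lia|].
    destruct (H n ltac:(lia)) as [L HL].
    exists (Ls ++ [L]). split. { rewrite length_app. simpl. lia. }
    intros j Hj. destruct (Nat.eq_dec j n).
    + rewrite e. rewrite app_nth2 by lia. rewrite Hl, Nat.sub_diag. exact HL.
    + rewrite app_nth1 by lia. apply HP; lia.
Qed.

Lemma per_r f p q r : 0<f<1 -> (2<=p)%nat -> (2<=q)%nat -> 0 <= r <= 1 ->
  exists L, line_ok L /\ forall t1 t2, in_D f p q t1 t2 -> exists al be ga,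
    forall s1 s2, in_D f p q s1 s2 -> side L s1 s2 = side L t1 t2 ->
      pi_fun f p q s1 s2 r = al*s1+be*s2+ga.
Proof.
  intros Hf Hp Hq Hr.
  destruct (shape f p q r Hf Hp Hq Hr) as [k [Hk [H|[HSk H]]]].
  - apply (line_lemma (fun s1 s2 => pi_fun f p q s1 s2 r) (in_D f p q)
      (r - al f p q k) 0 (gg f (al f p q k)) 0 (r - be f p q k) (gg f (be f p q k))
      (r - al f p q k) 0 (gg f (al f p q k)) 0 (r - be f p q k) (gg f (be f p q k))).
    intros s1 s2 Ds. rewrite (H s1 s2 Ds), Aform, Bform by auto. split; intros.
    + rewrite Rmin_left; lra.
    + rewrite Rmin_right; lra.
  - apply (line_lemma (fun s1 s2 => pi_fun f p q s1 s2 r) (in_D f p q)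
      (r - al f p q k) 0 (gg f (al f p q k)) 0 (r - be f p q (S k)) (gg f (be f p q (S k)))
      0 (r - be f p q (S k)) (gg f (be f p q (S k))) (r - al f p q k) 0 (gg f (al f p q k))).
    intros s1 s2 Ds. rewrite (H s1 s2 Ds), Aform, Bform by (auto; lia). split; intros.
    + rewrite Rmax_right; lra.
    + rewrite Rmax_left; lra.
Qed.

Theorem proposition1 (f : R) (p q : nat) (n : nat) (r : nat -> R) :
  0 < f < 1 -> (2 <= p)%nat -> (2 <= q)%nat ->
  (forall j, (j < n)%nat -> 0 <= r j < 1) ->
  exists Ls : list (R * R * R),
    (length Ls <= n)%nat /\
    (forall L, In L Ls -> line_ok L) /\
    forall t1 t2, in_D f p q t1 t2 ->
      forall j, (j < n)%nat ->
        exists alpha beta gamma : R,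
          forall s1 s2, in_D f p q s1 s2 -> same_region Ls s1 s2 t1 t2 ->
            pi_fun f p q s1 s2 (r j) = alpha * s1 + beta * s2 + gamma.
Proof.
  intros Hf Hp Hq Hr.
  destruct (build n (fun j L => line_ok L /\ forall t1 t2, in_D f p q t1 t2 -> exists al be ga,
    forall s1 s2, in_D f p q s1 s2 -> side L s1 s2 = side L t1 t2 ->
      pi_fun f p q s1 s2 (r j) = al*s1+be*s2+ga)) as [Ls [Hlen HP]].
  { intros j Hj. apply per_r; auto. pose proof (Hr j Hj). lra. }
  exists Ls. split; [lia|]. split.
  - intros L HL. destruct (In_nth Ls L (0,0,0) HL) as [j [Hj Hn]].
    rewrite <- Hn. apply HP. lia.
  - intros t1 t2 Dt j Hj. destruct (HP j Hj) as [_ H].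
    destruct (H t1 t2 Dt) as [a [b [c Habc]]]. exists a, b, c.
    intros s1 s2 Ds Hreg. apply Habc; auto. apply Hreg. apply nth_In. lia.
Qed.
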